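(* Let $X$ be an $n$-dimensional random vector with $X\le_{\mathrm{cx}}\mathcal N(\mu,\sigma^2I)$, and let $\alpha>0$. Then $$\mathrm P(\|X-\mu\|_\infty\le\alpha)\ge1-\sqrt2\,n\,e^{-\alpha^2/(4\sigma^2)}.$$ In particular, for $\gamma\in(0,1]$, $\mathrm P\bigl(\|X-\mu\|_\infty\le2\sigma\sqrt{\log(\sqrt2n/\gamma)}\bigr)\ge1-\gamma$.
   Context: For random vectors $X,Y$ in $\mathbb R^n$, $X\le_{\mathrm{cx}}Y$ (convex order) means $\mathbb Ef(X)\le\mathbb Ef(Y)$ for all convex $f:\mathbb R^n\to\mathbb R$ for which the expectations exist; a distribution on the right denotes a random vector with that distribution. *)

(* Defs.v *)
From HB Require Import structures.
From mathcomp Require Import all_boot all_order all_algebra.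
From mathcomp Require Import all_classical all_reals all_analysis.
Set Implicit Arguments. Unset Strict Implicit. Unset Printing Implicit Defensive.
Import Order.TTheory GRing.Theory Num.Theory.
Import numFieldNormedType.Exports.
Local Open Scope classical_set_scope.
Local Open Scope ring_scope.

Definition random_vector {d} {T : measurableType d} {R : realType} {n : nat}
    (X : T -> 'rV[R]_n) : Prop :=
  forall i : 'I_n, measurable_fun setT (fun t => X t ord0 i).

(* E[g] exists (possibly infinite): g is measurable and at least one of the
   integrals of the positive part and the negative part is finite. *)
Definition expectation_exists {d} {T : measurableType d} {R : realType}
    (P : probability T R) (g : T -> R) : Prop :=
  measurable_fun setT g /\
  ((\int[P]_x (g^\+ x)%:E < +oo)%E \/ (\int[P]_x (g^\- x)%:E < +oo)%E).

Definition cx_le {d d'} {T : measurableType d} {T' : measurableType d'}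
    {R : realType} {n : nat}
    (P : probability T R) (X : T -> 'rV[R]_n)
    (Q : probability T' R) (Y : T' -> 'rV[R]_n) : Prop :=
  forall f : 'rV[R]_n -> R,
    convex_function setT f ->
    expectation_exists P (fun t => f (X t)) ->
    expectation_exists Q (fun t => f (Y t)) ->
    (\int[P]_t (f (X t))%:E <= \int[Q]_t (f (Y t))%:E)%E.

(* Y has law N(mu, sigma^2 I): its coordinates are independent, the i-th one
   being normal with mean mu_i and standard deviation sigma
   (product rule on all Borel rectangles, which determines the law). *)
Definition gaussian_iso_law {d} {T : measurableType d} {R : realType} {n : nat}
    (Q : probability T R) (Y : T -> 'rV[R]_n) (mu : 'rV[R]_n) (sigma : R) : Prop :=
  random_vector Y /\
  forall A : 'I_n -> set R, (forall i, measurable (A i)) ->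
    Q [set t | forall i, A i (Y t ord0 i)] =
      (\prod_(i < n) normal_prob (mu ord0 i) sigma (A i))%E.

(* Main.v *)
Require Import Defs.
From HB Require Import structures.
From mathcomp Require Import all_boot all_order all_algebra.
From mathcomp Require Import all_classical all_reals all_analysis.
From mathcomp Require Import measurable_realfun.
From mathcomp Require Import ring lra.
From mathcomp Require Import unstable.
Import Order.TTheory GRing.Theory Num.Theory.
Import numFieldNormedType.Exports.
Local Open Scope classical_set_scope.
Local Open Scope ring_scope.

Lemma rv_norm_le (R : realType) n (x : 'rV[R]_n) (a : R) : 0 <= a ->
  (`|x| <= a) <-> (forall i : 'I_n, `|x ord0 i| <= a).
Proof.
move=> a0; rewrite [`|x|]mx_normrE; split.
  move=> /bigmax_leP [_ H] i; exact: (H (ord0, i)).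
move=> H; apply/bigmax_leP; split => // -[i j] _ /=.
by rewrite (ord1 i); exact: H.
Qed.

Section dens.
Context (R : realType) (m s : R).
Local Notation mu := (@lebesgue_measure R).
Local Open Scope ereal_scope.

Let integral_normal_indic (E : set (measurableTypeR R)) : measurable E ->
  \int[normal_prob m s]_x (\1_E x)%:E =
  \int[mu]_x ((\1_E x)%:E * (normal_pdf m s x)%:E).
Proof.
move=> mE; rewrite integral_indic//= setIT /normal_prob integral_mkcond.
apply: eq_integral => x _; rewrite patchE indicE; case: ifPn => _.
  by rewrite mul1e.
by rewrite mul0e.
Qed.

Import HBNNSimple.

Let integral_normal_nnsfun (f : {nnsfun measurableTypeR R >-> R}) :
  \int[normal_prob m s]_x (f x)%:E =
  \int[mu]_x ((f x)%:E * (normal_pdf m s x)%:E).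
Proof.
under [LHS]eq_integral do rewrite fimfunE -fsumEFin//.
rewrite [LHS]ge0_integral_fsum//; last 2 first.
  - by move=> r; apply/measurable_EFinP; apply: measurable_funM.
  - by move=> n x _; rewrite nnfun_muleindic_ge0.
under [RHS]eq_integral.
  move=> x xD; rewrite fimfunE -fsumEFin// ge0_mule_fsuml; last first.
    by move=> r; rewrite EFinM nnfun_muleindic_ge0.
  over.
rewrite [RHS]ge0_integral_fsum//; last 2 first.
  - move=> r; apply: emeasurable_funM.
      exact/measurable_EFinP/measurableT_comp.
    by apply/measurable_EFinP; exact: measurable_normal_pdf.
  - move=> n x _; rewrite mule_ge0 //; first by rewrite EFinM nnfun_muleindic_ge0.
    by rewrite lee_fin normal_pdf_ge0.
apply: eq_fsbigr => r _.
have [r0|r0] := ltP r 0%R.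
  rewrite preimage_nnfun0// indic0.
  under eq_integral do rewrite mulr0.
  under [RHS]eq_integral do rewrite mulr0 mul0e.
  by rewrite !integral0.
rewrite integralZl_indic_nnsfun.
under [RHS]eq_integral do rewrite EFinM -muleA.
rewrite ge0_integralZl//.
- by rewrite integral_normal_indic.
- apply: emeasurable_funM.
    by apply/measurable_EFinP; apply: measurable_indic.
  by apply/measurable_EFinP; exact: measurable_normal_pdf.
- by move=> x _; rewrite mule_ge0// lee_fin ?normal_pdf_ge0.
exact: measurableT.
Qed.

Lemma integral_normal_prob (f : measurableTypeR R -> \bar R) :
  measurable_fun setT f -> (forall x, 0 <= f x) ->
  \int[normal_prob m s]_x f x = \int[mu]_x (f x * (normal_pdf m s x)%:E).
Proof.
move=> mf f0.
pose f_ := nnsfun_approx measurableT mf.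
transitivity (limn (fun n => \int[normal_prob m s]_x (f_ n x)%:E)).
  rewrite -monotone_convergence//.
  - apply: eq_integral => y _; apply/esym/cvg_lim => //.
    by apply: cvg_nnsfun_approx=> // *.
  - by move=> n; exact/measurable_EFinP/measurable_funP.
  - by move=> n y _; rewrite lee_fin.
  - by move=> y _ a b ab; rewrite lee_fin; exact/lefP/nd_nnsfun_approx.
transitivity (limn (fun n => \int[mu]_x ((f_ n x)%:E * (normal_pdf m s x)%:E))).
  by congr (limn _); apply/funext => n; exact: integral_normal_nnsfun.
rewrite -monotone_convergence//.
- apply: eq_integral => y _; apply/cvg_lim => //.
  apply: cvgeZr => //.
  by apply: cvg_nnsfun_approx=> // *.
- move=> n; apply: emeasurable_funM.
    exact/measurable_EFinP/measurable_funP.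
  by apply/measurable_EFinP; exact: measurable_normal_pdf.
- by move=> n y _; rewrite mule_ge0// lee_fin ?normal_pdf_ge0.
- move=> y _ a b ab; rewrite lee_wpmul2r// ?lee_fin ?normal_pdf_ge0//.
  exact/lefP/nd_nnsfun_approx.
Qed.
End dens.

Section mgf.
Context (R : realType).
Local Notation mu := (@lebesgue_measure R).

Lemma normal_sq_identity (m s x : R) : 0 < s ->
  expR ((x - m) ^+ 2 / (4 * s ^+ 2)) * normal_pdf m s x =
  Num.sqrt 2 * normal_pdf m (Num.sqrt 2 * s) x.
Proof.
move=> s0.
have s2 : 0 < Num.sqrt 2 :> R by rewrite sqrtr_gt0.
rewrite /normal_pdf gt_eqF// gt_eqF ?mulr_gt0//.
rewrite /normal_peak /normal_fun.
rewrite exprMn sqr_sqrtr//.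
have -> : 2 * s ^+ 2 * pi *+ 2 = 2 * (s ^+ 2 * pi *+ 2) by rewrite mulrnAr mulrA.
rewrite sqrtrM ?ler0n//.
have -> : - (x - m) ^+ 2 / (2 * s ^+ 2 *+ 2) =
   (x - m) ^+ 2 / (4 * s ^+ 2) + - (x - m) ^+ 2 / (s ^+ 2 *+ 2).
  move: ((x - m) ^+ 2) => y; field.
  by rewrite gt_eqF// exprn_gt0.
rewrite expRD.
have A0 : 0 < Num.sqrt (s ^+ 2 * pi *+ 2).
  by rewrite sqrtr_gt0 mulrn_wgt0// mulr_gt0 ?pi_gt0// exprn_gt0.
move: A0 s2; move: (Num.sqrt (s ^+ 2 * pi *+ 2)) (Num.sqrt 2 : R) => A r A0 r0.
move: (expR _) (expR _) => B C.
field.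
by rewrite !gt_eqF.
Qed.

Lemma normal_mgf (m s : R) : 0 < s ->
  (\int[normal_prob m s]_x (expR ((x - m) ^+ 2 / (4 * s ^+ 2)))%:E =
   (Num.sqrt 2)%:E)%E.
Proof.
move=> s0.
rewrite integral_normal_prob; last 2 first.
- apply/measurable_EFinP; apply: measurableT_comp => //.
  apply: measurable_funM => //; apply: measurable_funX => //.
  exact: measurable_funB.
- by move=> x; rewrite lee_fin expR_ge0.
under eq_integral do rewrite -EFinM normal_sq_identity// EFinM.
rewrite ge0_integralZl//.
- by rewrite integral_normal_pdf mule1.
- by apply/measurable_EFinP; exact: measurable_normal_pdf.
- by move=> x _; rewrite lee_fin normal_pdf_ge0.
Qed.
End mgf.

Lemma marginal_law (R : realType) (n : nat) (d' : measure_display)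
  (T' : measurableType d') (Q : probability T' R) (Y : T' -> 'rV[R]_n)
  (mu : 'rV[R]_n) (sigma : R) :
  gaussian_iso_law Q Y mu sigma -> forall (i : 'I_n) (B : set R), measurable B ->
  Q ((fun t => Y t ord0 i) @^-1` B) = normal_prob (mu ord0 i) sigma B.
Proof.
move=> [_ HQ] i B mB.
pose A j := if j == i then B else setT.
have mA j : measurable (A j) by rewrite /A; case: ifP.
have -> : (fun t => Y t ord0 i) @^-1` B = [set t | forall j, A j (Y t ord0 j)].
  apply/seteqP; split => t /=.
    by move=> Bt j; rewrite /A; case: eqP => // ->.
  by move=> /(_ i); rewrite /A eqxx.
rewrite HQ// (bigD1 i)//= /A eqxx big1 ?mule1// => j /negbTE ->.
exact: probability_setT.
Qed.

Lemma marginal_mgf (R : realType) (n : nat) (d' : measure_display)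
  (T' : measurableType d') (Q : probability T' R) (Y : T' -> 'rV[R]_n)
  (mu : 'rV[R]_n) (sigma : R) : 0 < sigma ->
  gaussian_iso_law Q Y mu sigma -> forall (i : 'I_n),
  (\int[Q]_t (expR ((Y t ord0 i - mu ord0 i) ^+ 2 / (4 * sigma ^+ 2)))%:E =
   (Num.sqrt 2)%:E)%E.
Proof.
move=> s0 HY i.
have mYi : measurable_fun setT (fun t => Y t ord0 i : measurableTypeR R).
  by case: HY => + _; apply.
pose g (x : measurableTypeR R) := (expR ((x - mu ord0 i) ^+ 2 / (4 * sigma ^+ 2)))%:E.
have mg : measurable_fun setT g.
  apply/measurable_EFinP; apply: measurableT_comp => //.
  apply: measurable_funM => //; apply: measurable_funX => //.
  exact: measurable_funB.
transitivity (\int[pushforward Q (fun t => Y t ord0 i : measurableTypeR R)]_(y in setT) g y)%E.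
  rewrite ge0_integral_pushforward//; last by move=> y _; rewrite lee_fin expR_ge0.
rewrite (eq_measure_integral (normal_prob (mu ord0 i) sigma)); last first.
  by move=> A mA _; exact: (@marginal_law _ _ _ _ _ _ _ _ HY i A mA).
exact: normal_mgf.
Qed.

Section convexity.
Local Open Scope convex_scope.
Lemma sq_convex (R : realType) (a b : R) (t : {i01 R}) :
  (t%:inum * a + onem t%:inum * b) ^+ 2 <= t%:inum * a ^+ 2 + onem t%:inum * b ^+ 2.
Proof.
have t0 : 0 <= t%:inum by [].
have t1 : t%:inum <= 1 by [].
rewrite /onem; move: (t%:inum) t0 t1 => u u0 u1.
rewrite -subr_ge0.
have -> : u * a ^+ 2 + (1 - u) * b ^+ 2 - (u * a + (1 - u) * b) ^+ 2 =
  u * (1 - u) * (a - b) ^+ 2 by ring.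
by apply: mulr_ge0; [apply: mulr_ge0 => //; rewrite subr_ge0 | exact: sqr_ge0].
Qed.


Lemma convex_F (R : realType) n (mu : 'rV[R]_n) (k : R) : 0 <= k ->
  convex_function setT (fun x : 'rV[R]_n => \sum_(i < n) expR ((x ord0 i - mu ord0 i) ^+ 2 * k) : R^o).
Proof.
move=> k0 t x y _ _.
rewrite convRE mulr_sumr [X in _ <= _ + X]mulr_sumr -big_split /=.
apply: ler_sum => i _.
have -> : (x <|t|> y) ord0 i = t%:num * x ord0 i + (t%:num).~ * y ord0 i.
  by rewrite /= !mxE.
move: (x ord0 i) (y ord0 i) (mu ord0 i) => xi yi mi.
have -> : t%:num * xi + (t%:num).~ * yi - mi =
  t%:num * (xi - mi) + (t%:num).~ * (yi - mi) by rewrite /onem; ring.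
move: (xi - mi) (yi - mi) => a b.
apply: (@le_trans _ _ (expR (t%:num * (a ^+ 2 * k) + (t%:num).~ * (b ^+ 2 * k)))).
  rewrite ler_expR.
  have -> : t%:num * (a ^+ 2 * k) + (t%:num).~ * (b ^+ 2 * k) =
    (t%:num * a ^+ 2 + (t%:num).~ * b ^+ 2) * k by ring.
  by rewrite ler_wpM2r// sq_convex.
by have := convex_expR t (a ^+ 2 * k) (b ^+ 2 * k); rewrite !convRE.
Qed.

End convexity.

Theorem mainTheorem13 (R : realType) (n : nat)
    (d : measure_display) (T : measurableType d) (P : probability T R)
    (X : T -> 'rV[R]_n)
    (d' : measure_display) (T' : measurableType d') (Q : probability T' R)
    (Y : T' -> 'rV[R]_n) (mu : 'rV[R]_n) (sigma : R) :
  0 < sigma ->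
  random_vector X ->
  gaussian_iso_law Q Y mu sigma ->
  cx_le P X Q Y ->
  (forall alpha : R, 0 < alpha ->
     ((1 - Num.sqrt 2 * n%:R * expR (- alpha ^+ 2 / (4 * sigma ^+ 2)))%:E
        <= P [set t | (`|X t - mu| <= alpha)%R])%E) /\
  (forall gamma : R, 0 < gamma <= 1 ->
     ((1 - gamma)%:E
        <= P [set t | (`|X t - mu|
                       <= 2 * sigma * Num.sqrt (ln (Num.sqrt 2 * n%:R / gamma)))%R])%E).
Proof.
move=> s0 rvX HY cxXY.
pose F (x : 'rV[R]_n) := \sum_(i < n) expR ((x ord0 i - mu ord0 i) ^+ 2 / (4 * sigma ^+ 2)).
have F0 x : 0 <= F x by apply: sumr_ge0 => i _; exact: expR_ge0.
have mFX : measurable_fun setT (fun t => F (X t)).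
  apply: measurable_sum => i; apply: measurableT_comp => //.
  apply: measurable_funM => //; apply: measurable_funX => //.
  by apply: measurable_funB => //; exact: rvX.
have rvY : random_vector Y by case: HY.
have mFY : measurable_fun setT (fun t => F (Y t)).
  apply: measurable_sum => i; apply: measurableT_comp => //.
  apply: measurable_funM => //; apply: measurable_funX => //.
  by apply: measurable_funB => //; exact: rvY.
have EX : expectation_exists P (fun t => F (X t)).
  split => //; right.
  rewrite (eq_integral (fun _ => 0%E)) ?integral0// => t _.
  by rewrite (@ge0_funrnegE _ _ setT) ?in_setT// => x _; exact: F0.
have EY : expectation_exists Q (fun t => F (Y t)).
  split => //; right.
  rewrite (eq_integral (fun _ => 0%E)) ?integral0// => t _.
  by rewrite (@ge0_funrnegE _ _ setT) ?in_setT// => x _; exact: F0.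
have bound : (\int[P]_t (F (X t))%:E <= (Num.sqrt 2 * n%:R)%:E)%E.
  have cF : convex_function setT F.
    by apply: convex_F; rewrite invr_ge0 mulr_ge0// sqr_ge0.
  apply: le_trans (cxXY F cF EX EY) _.
  under eq_integral do rewrite /F -sumEFin.
  rewrite ge0_integral_sum//; last first.
    move=> i; apply/measurable_EFinP; apply: measurableT_comp => //.
    apply: measurable_funM => //; apply: measurable_funX => //.
    by apply: measurable_funB => //; exact: rvY.
  under eq_bigr do rewrite (@marginal_mgf _ _ _ _ _ _ _ _ s0 HY).
  by rewrite sumEFin sumr_const card_ord mulr_natr.
have part1 : forall alpha : R, 0 < alpha ->
     ((1 - Num.sqrt 2 * n%:R * expR (- alpha ^+ 2 / (4 * sigma ^+ 2)))%:E
        <= P [set t | (`|X t - mu| <= alpha)%R])%E.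
  move=> a a0.
  set S := [set t | (`|X t - mu| <= a)%R].
  have SE : S = \bigcap_(i in [set: 'I_n])
      ((fun t => `|X t ord0 i - mu ord0 i|) @^-1` `]-oo, a]).
    apply/seteqP; split => t /=.
      move=> /(rv_norm_le _ _ _ _ (ltW a0)) H i _ /=; rewrite in_itv/=.
      by have := H i; rewrite !mxE.
    move=> H; apply/(rv_norm_le _ _ _ _ (ltW a0)) => i.
    by have := H i I; rewrite /= in_itv/= !mxE.
  have mS : measurable S.
    rewrite SE; apply: fin_bigcap_measurable => //.
    move=> i _; rewrite -[X in measurable X]setTI.
    have mf : measurable_fun setT (fun t => `|X t ord0 i - mu ord0 i|).
      by apply: measurableT_comp => //; apply: measurable_funB => //; exact: rvX.
    exact: mf.
  set c := expR (a ^+ 2 / (4 * sigma ^+ 2)).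
  have c0 : 0 < c := expR_gt0 _.
  have mCS : measurable (~` S) by exact: measurableC.
  have mark : (c%:E * P (~` S) <= \int[P]_t (F (X t))%:E)%E.
    rewrite -(setIT (~` S)) -integral_indic// -ge0_integralZl//; last 2 first.
    - by apply/measurable_EFinP; exact: measurable_indic.
    - by rewrite lee_fin ltW.
    apply: ge0_le_integral => //.
    - by move=> t _; rewrite mule_ge0// lee_fin ?ltW.
    - apply: emeasurable_funM => //.
      by apply: measurableT_comp => //; exact: measurable_indic.
    - by apply: measurableT_comp => //.
    move=> t _; rewrite indicE; case: (boolP (t \in ~` S)) => tS; last first.
      by rewrite mule0 lee_fin.
    rewrite mule1 lee_fin.
    have nS : ~ S t by move: tS; rewrite inE.
    have [i Hi] : exists i, a < `|X t ord0 i - mu ord0 i|.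
      apply: contrapT => H; apply: nS; apply/(rv_norm_le _ _ _ _ (ltW a0)) => i.
      rewrite !mxE leNgt; apply/negP => Hi; apply: H; by exists i.
    rewrite /F (bigD1 i)//= -[c]addr0 lerD//; last first.
      by apply: sumr_ge0 => j _; exact: expR_ge0.
    rewrite ler_expR; apply: ler_wpM2r; first by rewrite invr_ge0 mulr_ge0 ?sqr_ge0.
    rewrite -[(X t ord0 i - mu ord0 i) ^+ 2]real_normK ?num_real// !expr2.
    by apply: ler_pM; [exact: ltW a0|exact: ltW a0|exact: ltW Hi|exact: ltW Hi].
  have [p Pp] : exists p, P (~` S) = p%:E.
    by exists (fine (P (~` S))); rewrite fineK// fin_num_measure.
  have PS : P S = (1 - p)%:E.
    by rewrite -(setCK S) probability_setC// Pp.
  have -> : P S = (1 - p)%:E by exact: PS.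
  rewrite lee_fin lerD2l lerN2.
  have H : c * p <= Num.sqrt 2 * n%:R.
    by rewrite -lee_fin EFinM -Pp; exact: le_trans mark bound.
  rewrite mulNr expRN -/c ler_pdivlMr// mulrC //.
split => // g /andP[g0 g1].
set a := 2 * sigma * Num.sqrt (ln (Num.sqrt 2 * n%:R / g)).
have a_ge0 : 0 <= a by rewrite mulr_ge0 ?sqrtr_ge0// mulr_ge0// ltW.
have [n0|n0] := eqVneq n 0%N.
  have -> : [set t | `|X t - mu| <= a] = setT.
    apply/seteqP; split => // t _ /=; apply/(rv_norm_le _ _ _ _ a_ge0) => i.
    have : (i < 0)%N by rewrite -[X in (_ < X)%N]n0; exact: ltn_ord.
    by rewrite ltn0.
  by rewrite probability_setT lee_fin lerBlDr lerDl ltW.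
have s2 : 1 < Num.sqrt 2 :> R.
  by rewrite -[X in X < _]sqrtr1 ltr_sqrt; lra.
have n1 : 1 <= n%:R :> R by rewrite ler1n lt0n.
have L1 : 1 < Num.sqrt 2 * n%:R / g.
  apply: (lt_le_trans s2); rewrite ler_pdivlMr//.
  apply: ler_pM => //; first by rewrite ltW// (lt_trans ltr01).
  exact: le_trans g1 n1.
have L0 := ln_gt0 L1.
have a0 : 0 < a by rewrite mulr_gt0 ?sqrtr_gt0// mulr_gt0.
have E : Num.sqrt 2 * n%:R * expR (- a ^+ 2 / (4 * sigma ^+ 2)) = g.
  have -> : - a ^+ 2 / (4 * sigma ^+ 2) = - ln (Num.sqrt 2 * n%:R / g).
    rewrite /a !exprMn sqr_sqrtr ?ltW//.
    move: (ln _) => L; field.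
    by rewrite gt_eqF// exprn_gt0.
  rewrite expRN lnK; last by rewrite posrE (lt_trans ltr01).
  have sn0 : 0 < Num.sqrt 2 * n%:R :> R.
    by apply: mulr_gt0; [exact: lt_trans ltr01 s2|exact: lt_le_trans ltr01 n1].
  move: sn0; move: (Num.sqrt 2 * n%:R) => q q0.
  field; by rewrite !gt_eqF.
by have := part1 a a0; rewrite E.
Qed.
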